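(* Let $G$ be a group and let $V$ be a finite-dimensional vector space. Let $\tau\in\mathrm{LNUCA}_c(G,V)$ be stably injective. Then there exists $\sigma\in\mathrm{LNUCA}_c(G,V)$ such that $\sigma\circ\tau=\mathrm{Id}$.
   Context: For $g\in G$ and $x\in V^G$, $(gx)(h)=x(g^{-1}h)$. For finite $M\subset G$, $S=\mathcal{L}(V^M,V)$ and $s\in S^G$, $\sigma_s\colon V^G\to V^G$ is $\sigma_s(x)(g)=s(g)((g^{-1}x)\vert_M)$. $\mathrm{LNUCA}_c(G,V)$ is the set of maps $\sigma_s$ with $M$ finite and $s\in S^G$ constant outside some finite subset of $G$. For $s\in S^G$, $\Sigma(s)$ is the closure of $\{gs:g\in G\}$ in $S^G$ for the prodiscrete topology. $\tau=\sigma_s$ is stably injective if $\sigma_p$ is injective for every $p\in\Sigma(s)$. *)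

(* Defs.v *)
From HB Require Import structures.
From mathcomp Require Import all_boot all_order all_algebra.
From mathcomp Require Import finmap.
Set Implicit Arguments. Unset Strict Implicit. Unset Printing Implicit Defensive.
Import GRing.Theory.

Section LNUCA.
Variables (G : groupType) (K : fieldType) (V : vectType K).

Definition shift (g : G) (x : G -> V) : G -> V := fun h => x (g^-1 * h)%g.

Definition shiftS (S : Type) (g : G) (s : G -> S) : G -> S :=
  fun h => s (g^-1 * h)%g.

Definition restr (M : {fset G}) (x : G -> V) : {ffun M -> V} :=
  [ffun m : M => x (val m)].

Definition Sym (M : {fset G}) := {linear {ffun M -> V} -> V}.

Definition sigma (M : {fset G}) (s : G -> Sym M) (x : G -> V) : G -> V :=
  fun g => s g (restr M (shift g^-1 x)).

Definition asym_const (S : Type) (s : G -> S) : Prop :=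
  exists F : {fset G}, forall g h, g \notin F -> h \notin F -> s g = s h.

Definition LNUCAc (tau : (G -> V) -> (G -> V)) : Prop :=
  exists (M : {fset G}) (s : G -> Sym M), asym_const s /\ tau = sigma s.

(* p belongs to Sigma(s), the closure of the G-orbit of s in S^G for the
   prodiscrete topology (basic open sets = cylinders over finite subsets) *)
Definition in_orbit_closure (S : Type) (s p : G -> S) : Prop :=
  forall F : {fset G}, exists g : G, forall h, h \in F -> shiftS g s h = p h.

Definition stably_injective (M : {fset G}) (s : G -> Sym M) : Prop :=
  forall p : G -> Sym M, in_orbit_closure s p -> injective (sigma p).

End LNUCA.

(* Main.v *)
Require Import Defs.
From HB Require Import structures.
From mathcomp Require Import all_boot all_order all_algebra.
From mathcomp Require Import finmap.
From mathcomp Require Import boolp classical_sets.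
From mathcomp Require Import zify.
From Stdlib Require Import Classical ClassicalEpsilon FunctionalExtensionality.
Set Implicit Arguments. Unset Strict Implicit. Unset Printing Implicit Defensive.
Import GRing.Theory.

Module Aux.
Local Open Scope ring_scope.
Section MK.
Variables (K : fieldType) (W V : lmodType K) (f : W -> V) (fL : linear f).
Definition mkfun := f.
HB.instance Definition _ := GRing.isLinear.Build K W V *:%R mkfun fL.
Definition mklin : {linear W -> V} := mkfun.
Lemma mklinE w : mklin w = f w. Proof. by []. Qed.
End MK.

Lemma fchoice (A B : Type) (P : A -> B -> Prop) :
  (forall a, exists b, P a b) -> exists f : A -> B, forall a, P a (f a).
Proof.
move=> H; exists (fun a => proj1_sig (constructive_indefinite_description _ (H a))).
by move=> a; case: (constructive_indefinite_description _ (H a)).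
Qed.

Lemma argmin_nat (A : Type) (a0 : A) (f : A -> nat) :
  exists a, forall b, (f a <= f b)%N.
Proof.
suff H : forall n a, (f a <= n)%N -> exists a', forall b, (f a' <= f b)%N.
  exact: (H _ a0 (leqnn _)).
elim=> [|n IH] a Ha.
  by exists a => b; move: Ha; rewrite leqn0 => /eqP ->.
case: (classic (forall b, (f a <= f b)%N)) => [H|/not_all_ex_not [b Hb]].
  by exists a.
apply: (IH b); move/negP: Hb; rewrite -ltnNge => Hb; lia.
Qed.

Section VS.
Variables (K : fieldType) (W : vectType K) (P : W -> Prop).
Hypotheses (P0 : P 0) (PC : forall a u v, P u -> P v -> P (a *: u + v)).

Lemma span_P (l : seq W) : (forall x, x \in l -> P x) -> forall w, w \in <<l>>%VS -> P w.
Proof.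
elim: l => [|x l IH] Hl w.
  by rewrite span_nil memv0 => /eqP ->.
rewrite span_cons => /memv_addP [u /vlineP [k ->] [v Hv ->]].
apply: PC; first by apply: Hl; rewrite inE eqxx.
by apply: IH => // y Hy; apply: Hl; rewrite inE Hy orbT.
Qed.

Lemma grow (l : seq W) : ~ (forall w, P w -> w \in <<l>>%VS) ->
  exists w, P w /\ (\dim <<l>>%VS < \dim <<w :: l>>%VS)%N.
Proof.
case/not_all_ex_not => w Hn; have [Pw Hw] := imply_to_and _ _ Hn; exists w; split; first exact: Pw.
have Hs : (<<l>> <= <<w :: l>>)%VS by rewrite span_cons; exact: addvSr.
rewrite ltn_neqAle (dimvS Hs) andbT; apply/negP => /eqP Heq.
have := dimv_leqif_eq Hs; rewrite Heq => -[_]; rewrite eqxx => /esym /eqP E.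
apply: Hw; rewrite E span_cons -[X in X \in _]addr0; apply: memv_add; [exact: memv_line|exact: mem0v].
Qed.

Lemma vspace_of : exists U : {vspace W}, forall w, w \in U <-> P w.
Proof.
suff H : forall m (l : seq W), (forall x, x \in l -> P x) ->
    (\dim {:W} - \dim <<l>>%VS <= m)%N -> exists U : {vspace W}, forall w, w \in U <-> P w.
  by apply: (H _ [::]) => //.
elim=> [|m IH] l Hl Hd.
  case: (classic (forall w, P w -> w \in <<l>>%VS)) => [H|/grow [w [Pw Hlt]]].
    by exists <<l>>%VS => w; split; [exact: span_P|exact: H].
  have Hle : (\dim <<w :: l>>%VS <= \dim {:W})%N by exact: dimvS (subvf _).
  lia.
case: (classic (forall w, P w -> w \in <<l>>%VS)) => [H|/grow [w [Pw Hlt]]].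
  by exists <<l>>%VS => w; split; [exact: span_P|exact: H].
have Hle : (\dim <<w :: l>>%VS <= \dim {:W})%N by exact: dimvS (subvf _).
apply: (IH (w :: l)); last lia.
by move=> x; rewrite inE => /orP [/eqP ->|]; [|apply: Hl].
Qed.
End VS.

Section Factor.
Variables (K : fieldType) (W V : vectType K) (P : W -> V -> Prop).
Hypotheses (P0 : P 0 0)
  (PC : forall a w1 v1 w2 v2, P w1 v1 -> P w2 v2 -> P (a *: w1 + w2) (a *: v1 + v2))
  (Pu : forall v, P 0 v -> v = 0).

Lemma P_uniq w v1 v2 : P w v1 -> P w v2 -> v1 = v2.
Proof.
move=> H1 H2; have := PC (-1) H2 H1; rewrite !scaleN1r addNr => /Pu.
by move/eqP; rewrite addrC subr_eq0 => /eqP.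
Qed.

Lemma factor_lin : exists l : {linear W -> V}, forall w v, P w v -> l w = v.
Proof.
have [U HU] := vspace_of (P := fun w => exists v, P w v)
  (ex_intro _ 0 P0) (fun a u v '(ex_intro v1 H1) '(ex_intro v2 H2) => ex_intro _ _ (PC a H1 H2)).
pose g w := epsilon (inhabits (0 : V)) (P w).
have gP w : w \in U -> P w (g w).
  by move=> /HU Hw; apply: epsilon_spec.
pose f w := g (projv U w).
have fL : linear f.
  move=> a u v; rewrite /f linearP.
  apply: (P_uniq (gP _ _)); first by rewrite memvD ?memvZ ?memv_proj.
  by apply: PC; apply: gP; apply: memv_proj.
exists (mklin fL) => w v Hwv; rewrite mklinE /f projv_id; last by apply/HU; exists v.
by apply: (P_uniq _ Hwv); apply: gP; apply/HU; exists v.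
Qed.
End Factor.
Section Compact.
Variables (G : choiceType) (K : fieldType) (V : vectType K).
Variable T : (G -> V) -> (G -> V).
Hypothesis Tlin : forall a x y n, T (fun h => a *: x h + y h) n = a *: T x n + T y n.
Hypothesis Tloc : forall n, exists D : {fset G},
  forall x y, (forall h, h \in D -> x h = y h) -> T x n = T y n.

Lemma T_ext x y n : x =1 y -> T x n = T y n.
Proof. by move=> e; have [D HD] := Tloc n; apply: HD => h _; apply: e. Qed.

Lemma T0 n : T (fun _ => 0) n = 0.
Proof.
have E : T (fun _ => 0) n = 1 *: T (fun _ => 0) n + T (fun _ => 0) n.
  by rewrite -Tlin; apply: T_ext => h; rewrite scaler0 addr0.
rewrite scale1r in E.
by rewrite -[LHS](addrK (T (fun _ => 0) n)) -E subrr.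
Qed.

Lemma TB x y n : T (fun h => x h - y h) n = T x n - T y n.
Proof.
rewrite (@T_ext _ (fun h => (-1) *: y h + x h)) => [|h]; last by rewrite scaleN1r addrC.
by rewrite Tlin scaleN1r addrC.
Qed.

Definition Good (f : G -> option V) := forall N E : {fset G},
  (forall e, e \in E -> f e <> None) ->
  exists x, (forall n, n \in N -> T x n = 0) /\ (forall e, e \in E -> f e = Some (x e)).

Definition upd (f : G -> option V) g v := fun h => if h == g then Some v else f h.

Lemma ext_strong m g : Good m -> m g = None ->
  exists N0 E0 : {fset G}, (forall e, e \in E0 -> m e <> None) /\
   forall x0, (forall n, n \in N0 -> T x0 n = 0) -> (forall e, e \in E0 -> m e = Some (x0 e)) ->
   Good (upd m g (x0 g)).
Proof.
move=> Gm mg.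
pose Up (p : {fset G} * {fset G}) u := exists y, (forall n, n \in p.1 -> T y n = 0) /\
   (forall e, e \in p.2 -> y e = 0) /\ y g = u.
have Wex : forall p, exists U : {vspace V}, forall u, u \in U <-> Up p u.
  move=> p; apply: vspace_of.
    exists (fun _ => 0); split; first by move=> n _; apply: T0.
    by split.
  move=> a u v [y1 [H11 [H12 H13]]] [y2 [H21 [H22 H23]]].
  exists (fun h => a *: y1 h + y2 h); split; first by move=> n Hn; rewrite Tlin H11 // H21 // scaler0 addr0.
  split; first by move=> e He; rewrite H12 // H22 // scaler0 addr0.
  by rewrite H13 H23.
have [Wf HW] := fchoice Wex.
pose A := {p : {fset G} * {fset G} | forall e, e \in p.2 -> m e <> None}.
have a0 : A by exists (fset0, fset0)%fset => e; rewrite in_fset0.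
have [[[N0 E0] HE0] Hmin] := argmin_nat a0 (fun p => \dim (Wf (sval p))).
simpl in Hmin.
have key : forall N E, (forall e, e \in E -> m e <> None) -> (N0 `<=` N)%fset -> (E0 `<=` E)%fset ->
    forall u, Up (N0, E0) u -> Up (N, E) u.
  move=> N E HE sN sE u Hu.
  have sub : (Wf (N, E) <= Wf (N0, E0))%VS.
    apply/subvP => w /HW [y [Hy1 [Hy2 Hy3]]]; apply/HW; exists y; split.
      by move=> n Hn; apply: Hy1; apply: (fsubsetP sN).
    by split => // e He; apply: Hy2; apply: (fsubsetP sE).
  have Hd := Hmin (exist _ (N, E) HE); simpl in Hd.
  have /eqP Eq : Wf (N, E) == Wf (N0, E0) by rewrite eqEdim sub Hd.
  by apply/HW; rewrite Eq; apply/HW.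
exists N0, E0; split => // x0 Hx0N Hx0E N E HE.
pose E1 := [fset e in E | m e != None]%fset.
have HE1 : forall e, e \in (E1 `|` E0)%fset -> m e <> None.
  move=> e; rewrite in_fsetU => /orP [|/HE0 //].
  by rewrite !inE => /andP [_ /eqP].
have [x1 [Hx1N Hx1E]] := Gm (N `|` N0)%fset ((E1 `|` E0)%fset) HE1.
have Hu : Up (N0, E0) (x1 g - x0 g).
  exists (fun h => x1 h - x0 h); split.
    by move=> n Hn; rewrite TB Hx1N ?Hx0N ?subrr // in_fsetU Hn orbT.
  split => // e He; move: (Hx1E e); rewrite in_fsetU He orbT Hx0E // => H.
  by case: (H isT) => ->; rewrite subrr.
have [y [Hy1 [Hy2 Hy3]]] := key (N `|` N0)%fset (E1 `|` E0)%fset HE1 (fsubsetUr N N0) (fsubsetUr E1 E0) _ Hu.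
exists (fun h => x1 h - y h); split.
  by move=> n Hn; rewrite TB Hx1N ?Hy1 ?subrr // in_fsetU Hn.
move=> e He; rewrite /upd; case: eqP => [->|ne].
  by rewrite Hy3 opprB addrC subrK.
have Hme : m e <> None by move: (HE e He); rewrite /upd; case: eqP.
have He1 : e \in (E1 `|` E0)%fset.
  rewrite in_fsetU !inE He /=; apply/orP; left; apply/eqP. exact: Hme.
by rewrite Hx1E // Hy2 // subr0.
Qed.

Definition extf (f1 f2 : G -> option V) := forall h v, f1 h = Some v -> f2 h = Some v.

Lemma ext_weak m g : Good m -> m g = None -> exists v, Good (upd m g v).
Proof.
move=> Gm mg; have [N0 [E0 [HE0 H]]] := ext_strong Gm mg.
have [x0 [H1 H2]] := Gm N0 E0 HE0.
by exists (x0 g); apply: H.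
Qed.

Lemma global (fi : G -> option V) : Good fi ->
  exists x, (forall n, T x n = 0) /\ (forall h v, fi h = Some v -> x h = v).
Proof.
move=> Gfi.
pose TT := {f : G -> option V | Good f /\ extf fi f}.
pose t0 : TT := exist _ fi (conj Gfi (fun h v H => H)).
pose R (a b : TT) := `[< extf (sval a) (sval b) >].
have [| | |m Hm] := ZL_preorder t0 (R := R).
- by move=> a; apply/asboolP => h v.
- by move=> a b c /asboolP H1 /asboolP H2; apply/asboolP => h v /H1 /H2.
- move=> A Atot.
  pose P h v := exists a, A a /\ sval a h = Some v.
  pose ub h := if `[< exists v, P h v >] then Some (xget 0 (P h)) else fi h.
  have ubA : forall a, A a -> extf (sval a) ub.
    move=> a Aa h v Hv; rewrite /ub.
    have ex : exists v, P h v by exists v, a.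
    rewrite (asboolT ex); have [a' [Aa' Ha']] := xgetPex 0 ex.
    have [/asboolP E|/asboolP E] := Atot _ _ Aa Aa'.
      by move: (E _ _ Hv); rewrite Ha' => -[->].
    by move: (E _ _ Ha'); rewrite Hv => -[->].
  have ub0 : extf fi ub.
    move=> h v Hv; rewrite /ub; case: asboolP => // ex.
    have [a' [Aa' Ha']] := xgetPex 0 ex.
    by move: (proj2 (svalP a') _ _ Hv); rewrite Ha' => -[->].
  have cover : forall l : seq G, (forall e, e \in l -> ub e <> None) ->
      exists b : TT, (b = t0 \/ A b) /\ forall e, e \in l -> sval b e <> None.
    elim=> [|e l IH] Hl; first by exists t0; split; [left|].
    have [b [Hb1 Hb2]] := IH (fun e' He' => Hl e' (@mem_behead _ (e :: l) e' He')).
    have He : ub e <> None by apply: Hl; rewrite inE eqxx.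
    have [b' [Hb'1 Hb'2]] : exists b' : TT, (b' = t0 \/ A b') /\ sval b' e <> None.
      move: He; rewrite /ub; case: asboolP => [[v [a [Aa Ha]]] _|_ He].
        by exists a; split; [right|rewrite Ha].
      by exists t0; split; [left|exact: He].
    have le0 : forall c : TT, extf (sval t0) (sval c) by move=> c; exact: (proj2 (svalP c)).
    have dom : forall c d : TT, extf (sval c) (sval d) -> forall e, sval c e <> None -> sval d e <> None.
      move=> c d Hcd e0; case E: (sval c e0) => [v|] // _.
      by rewrite (Hcd _ _ E).
    case: Hb1 => [Eb|Ab].
      exists b'; split => // e0; rewrite inE => /orP [/eqP ->//|He0].
      by apply: (dom t0); [apply: le0|rewrite -Eb; apply: Hb2].
    case: Hb'1 => [Eb'|Ab'].
      exists b; split; first by right.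
      move=> e0; rewrite inE => /orP [/eqP ->|]; last exact: Hb2.
      by apply: (dom b'); [rewrite Eb'; apply: le0|].
    have [/asboolP E|/asboolP E] := Atot _ _ Ab Ab'.
      exists b'; split; first by right.
      move=> e0; rewrite inE => /orP [/eqP ->//|He0].
      by apply: (dom b) => //; apply: Hb2.
    exists b; split; first by right.
    move=> e0; rewrite inE => /orP [/eqP ->|]; last exact: Hb2.
    by apply: (dom b').
  have Gub : Good ub.
    move=> N E HE.
    have [b [Hb1 Hb2]] := cover (enum_fset E) HE.
    have [x [Hx1 Hx2]] := proj1 (svalP b) N E Hb2.
    exists x; split => // e He.
    have := Hx2 e He; case: Hb1 => [->|Ab] Hs; first exact: ub0.
    exact: ubA Ab _ _ Hs.
  exists (exist _ ub (conj Gub ub0)) => a Aa; apply/asboolP; exact: ubA.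
have Hm' : forall h, sval m h <> None.
  move=> h Hh.
  have [v Gv] := ext_weak (proj1 (svalP m)) Hh.
  have e1 : extf (sval m) (upd (sval m) h v).
    move=> h' v' Hv'; rewrite /upd; case: eqP => // E.
    by rewrite E Hh in Hv'.
  have e2 : extf fi (upd (sval m) h v).
    by move=> h' v' /(proj2 (svalP m)) /e1.
  have := Hm (exist _ (upd (sval m) h v) (conj Gv e2)) (introT (asboolP _) e1).
  move=> /asboolP /= E.
  by have := E h v; rewrite /upd eqxx Hh => /(_ erefl).
exists (fun h => odflt 0 (sval m h)); split.
  move=> n; have [D HD] := Tloc n.
  have [y [Hy1 Hy2]] := proj1 (svalP m) [fset n]%fset D (fun e _ => Hm' e).
  rewrite (HD _ y); first by apply: Hy1; rewrite in_fset1.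
  by move=> h Hh; rewrite Hy2.
by move=> h v /(proj2 (svalP m)) ->.
Qed.

Hypothesis Tinj : forall x, (forall n, T x n = 0) -> forall h, x h = 0.

Lemma memory g0 : exists N : {fset G},
  forall x, (forall n, n \in N -> T x n = 0) -> x g0 = 0.
Proof.
pose m0 : G -> option V := fun _ => None.
have Gm0 : Good m0.
  move=> N E HE; exists (fun _ => 0); split; first by move=> n _; apply: T0.
  by move=> e /HE.
have [N0 [E0 [HE0 H]]] := ext_strong Gm0 (g := g0) erefl.
exists N0 => x Hx.
have Gu := H x Hx (fun e He => False_ind _ (HE0 e He erefl)).
have [z [Hz1 Hz2]] := global Gu.
have := Hz2 g0 (x g0); rewrite /upd eqxx => /(_ erefl) <-.
exact: Tinj Hz1 g0.
Qed.
End Compact.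
Section Main.
Variables (G : groupType) (K : fieldType) (V : vectType K).

Lemma restr_shift (N : {fset G}) g (x : G -> V) :
  restr N (shift g^-1 x) = [ffun k : N => x (g * val k)%g].
Proof. by apply/ffunP => k; rewrite !ffunE /shift invgK. Qed.

Lemma sig_lin (M : {fset G}) (p : G -> Sym V M) a x y n :
  sigma p (fun h => a *: x h + y h) n = a *: sigma p x n + sigma p y n.
Proof.
rewrite /sigma -linearP; congr (p n _).
by apply/ffunP => k; rewrite !ffunE.
Qed.

Lemma sig_loc (M : {fset G}) (p : G -> Sym V M) n : exists D : {fset G},
  forall x y, (forall h, h \in D -> x h = y h) -> sigma p x n = sigma p y n.
Proof.
exists (seq_fset tt [seq (n * m)%g | m <- enum_fset M]) => x y Hxy.
rewrite /sigma !restr_shift; congr (p n _); apply/ffunP => k; rewrite !ffunE.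
apply: Hxy; rewrite seq_fsetE; apply: map_f; exact: fsvalP.
Qed.

Lemma sig0 (M : {fset G}) (p : G -> Sym V M) n : sigma p (fun _ => 0) n = 0.
Proof. exact: (T0 (@sig_lin M p) (@sig_loc M p)). Qed.

Lemma sig_inj (M : {fset G}) (p : G -> Sym V M) : injective (sigma p) ->
  forall x, (forall n, sigma p x n = 0) -> forall h, x h = 0.
Proof.
move=> inj x Hx h.
have E : sigma p x = sigma p (fun _ => 0).
  by apply: functional_extensionality => n; rewrite Hx sig0.
by rewrite (inj _ _ E).
Qed.


Lemma closure_self (S : Type) (s : G -> S) : in_orbit_closure s s.
Proof. by move=> F; exists 1%g => h _; rewrite /shiftS invg1 mul1g. Qed.

Lemma zero_lin (W : lmodType K) : exists l : {linear W -> V}, True.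
Proof.
have L : linear (fun _ : W => (0 : V)) by move=> a u v; rewrite scaler0 addr0.
by exists (mklin L).
Qed.

Variables (M : {fset G}) (s : G -> Sym V M).
Hypotheses (Hac : asym_const s) (Hsi : stably_injective s).

Lemma package : exists (E Nc : {fset G}) (Tc : (G -> V) -> (G -> V)),
  [/\ forall a x y n, Tc (fun h => a *: x h + y h) n = a *: Tc x n + Tc y n,
      forall n, Tc (fun _ => 0) n = 0,
      forall x, (forall n, n \in Nc -> Tc x n = 0) -> x 1%g = 0 &
      forall g x n, g \notin E -> n \in Nc -> sigma s x (g * n)%g = Tc (shift g^-1 x) n].
Proof.
case: (classic (exists U : {fset G}, forall g, g \in U)) => [[U HU]|HnU].
  exists U, [fset 1%g]%fset, (fun x _ => x 1%g); split => //.
  - by move=> x /(_ 1%g); rewrite in_fset1 eqxx => /(_ isT).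
  - by move=> g x n; rewrite HU.
have Hout : forall U : {fset G}, exists g, g \notin U.
  move=> U; apply: NNPP => H; apply: HnU; exists U => g.
  by apply: NNPP => Hg; apply: H; exists g; apply/negP.
case: Hac => F HF.
have [g1 Hg1] := Hout F.
pose c := s g1.
have Hc : forall g, g \notin F -> s g = c by move=> g Hg; apply: HF.
pose pc := fun _ : G => c.
have clos : in_orbit_closure s pc.
  move=> F'; have [g Hg] := Hout (seq_fset tt [seq (h * f^-1)%g | h <- enum_fset F', f <- enum_fset F]).
  exists g => h Hh; rewrite /shiftS /pc; apply: Hc; apply/negP => Hf; move/negP: Hg; apply.
  rewrite seq_fsetE.
  have -> : g = (h * (g^-1 * h)^-1)%g by rewrite invgM invgK mulVKg.
  by apply: allpairs_f.
have injc := sig_inj (Hsi clos).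
have [Nc HNc] := memory (@sig_lin _ pc) (@sig_loc _ pc) injc 1%g.
exists (seq_fset tt [seq (f * n^-1)%g | f <- enum_fset F, n <- enum_fset Nc]), Nc, (sigma pc).
split.
- exact: sig_lin.
- exact: sig0.
- exact: HNc.
move=> g x n Hg Hn.
have gnF : (g * n)%g \notin F.
  apply/negP => Hf; move/negP: Hg; apply; rewrite seq_fsetE.
  have -> : g = ((g * n) * n^-1)%g by rewrite mulgK.
  by apply: allpairs_f.
rewrite /sigma Hc // /pc !restr_shift; congr (c _); apply/ffunP => k; rewrite !ffunE.
by rewrite /shift invgK mulgA.
Qed.

Theorem main_thm : exists sig : (G -> V) -> (G -> V),
    LNUCAc sig /\ forall x : G -> V, sig (sigma s x) = x.
Proof.
have injs := sig_inj (Hsi (closure_self s)).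
have [Nf HNf] := fchoice (memory (@sig_lin _ s) (@sig_loc _ s) injs).
have [E [Nc [Tc [TcL Tc0 TcM TcE]]]] := package.
pose N := (Nc `|` seq_fset tt [seq (g^-1 * n)%g | g <- enum_fset E, n <- enum_fset (Nf g)])%fset.
have NcN : forall n, n \in Nc -> n \in N by move=> n Hn; rewrite in_fsetU Hn.
have NfN : forall g n, g \in E -> n \in Nf g -> (g^-1 * n)%g \in N.
  move=> g n Hg Hn; rewrite in_fsetU seq_fsetE; apply/orP; right.
  exact: (allpairs_f_dep (fun g n => (g^-1 * n)%g) Hg Hn).
have Hlf : forall g, exists l : Sym V N, g \in E ->
    forall x, l [ffun k : N => sigma s x (g * val k)%g] = x g.
  move=> g; case: (boolP (g \in E)) => Hg; last first.
    by have [l _] := zero_lin {ffun N -> V}; exists l.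
  pose P (w : {ffun N -> V}) v := exists x, w = [ffun k : N => sigma s x (g * val k)%g] /\ x g = v.
  have [l Hl] : exists l : Sym V N, forall w v, P w v -> l w = v.
    apply: (@factor_lin K {ffun N -> V} V P).
  - exists (fun _ => 0); split => //; apply/ffunP => k; rewrite !ffunE sig0 //.
  - move=> a w1 v1 w2 v2 [x1 [-> <-]] [x2 [-> <-]].
    exists (fun h => a *: x1 h + x2 h); split => //.
    by apply/ffunP => k; rewrite !ffunE sig_lin.
  - move=> v [x [Hw <-]]; apply: (HNf g x) => n Hn.
    have Hk := NfN g n Hg Hn.
    have := congr1 (fun f : {ffun N -> V} => f [` Hk]%fset) Hw.
    by rewrite !ffunE /= mulVKg.
  by exists l => _ x; apply: Hl; exists x.
have [lf Hlf'] := fchoice Hlf.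
have [lc Hlc] : exists l : Sym V N, forall g x, g \notin E ->
    l [ffun k : N => sigma s x (g * val k)%g] = x g.
  pose P (w : {ffun N -> V}) v := exists x,
    (forall k : N, val k \in Nc -> w k = Tc x (val k)) /\ x 1%g = v.
  have [l Hl] : exists l : Sym V N, forall w v, P w v -> l w = v.
    apply: (@factor_lin K {ffun N -> V} V P).
  - by exists (fun _ => 0); split => // k _; rewrite ffunE Tc0.
  - move=> a w1 v1 w2 v2 [x1 [H1 <-]] [x2 [H2 <-]].
    exists (fun h => a *: x1 h + x2 h); split => //.
    by move=> k Hk; rewrite !ffunE H1 // H2 // TcL.
  - move=> v [x [Hw <-]]; apply: TcM => n Hn.
    by have := Hw [` NcN n Hn]%fset Hn; rewrite ffunE /= => <-.
  exists l => g x Hg; apply: Hl; exists (shift g^-1 x); split.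
    by move=> k Hk; rewrite ffunE TcE.
  by rewrite /shift invgK mulg1.
pose t g := if g \in E then lf g else lc.
exists (sigma t); split.
  exists N, t; split => //; exists E => g h Hg Hh.
  by rewrite /t (negbTE Hg) (negbTE Hh).
move=> x; apply: functional_extensionality => g.
rewrite /sigma restr_shift /t; case: ifP => Hg.
  by rewrite Hlf'.
by rewrite Hlc // Hg.
Qed.

End Main.
End Aux.

Theorem theorem4p2 (G : groupType) (K : fieldType) (V : vectType K)
  (M : {fset G}) (s : G -> Sym V M) :
  asym_const s -> stably_injective s ->
  exists sig : (G -> V) -> (G -> V),
    LNUCAc sig /\ forall x : G -> V, sig (sigma s x) = x.
Proof. move=> Hac Hsi; exact: (@Aux.main_thm G K V M s Hac Hsi). Qed.
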